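(* Let $X\in\mathbb{R}^{N\times D}$, $y\in\mathbb{R}^N$ be partitioned into row blocks $X_i\in\mathbb{R}^{N_i\times D}$, $y_i\in\mathbb{R}^{N_i}$, $i\in[E]$, with $\sum_i N_i = N$. Write $Z = X^\top X$ and $Z_i = X_i^\top X_i$, and assume every $Z_i$ is invertible (hence so is $Z=\sum_i Z_i$). Let $w^* = Z^{-1}X^\top y$ and $w_i^* = Z_i^{-1}X_i^\top y_i$. Suppose that for each $i\in[E]$ there are $\beta_i\in\mathbb{R}^D$ and $r_i\in\mathbb{R}^{N_i}$ with $y_i = X_i\beta_i + r_i$. Define $\eta_i = Z_i^{-1}X_i^\top r_i$, $\eta = Z^{-1}X^\top r$ where $r\in\mathbb{R}^N$ is the concatenation of $r_1,\dots,r_E$, and for $i\neq j$ let $\Delta_{ij} = Z^{-1}Z_j(\beta_i-\beta_j)$ and $\Delta_i = \sum_{j\neq i}\Delta_{ij}$. Let $\gamma\in(0,1]$. If $$\|\Delta_i\| \ge \|\beta_i + \eta\| + \frac{1}{\sqrt{\gamma}}\|\beta_i+\eta_i\| \quad\text{for all } i\in[E],$$ then $\max_{i\in[E]}\|w_i^*\|^2 \le \gamma\|w^*\|^2$. Moreover, if $\|\eta\|\le \min_{i\in[E]}\|\beta_i\|$ and $\|\eta_i\|\le\|\beta_i\|$ for all $i\in[E]$, then the same conclusion $\max_{i}\|w_i^*\|^2\le\gamma\|w^*\|^2$ holds under the condition $\min_{i\in[E]}\big\{\|\Delta_i\| - \tfrac{4}{\sqrt{\gamma}}\|\beta_i\|\big\}\ge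 0$.
   Context: $\|\cdot\|$ denotes the Euclidean norm and $[E]=\{1,\dots,E\}$. $w^*$ is the least-squares solution of $\min_w\|Xw-y\|^2$ and $w_i^*$ that of $\min_{w_i}\|X_iw_i-y_i\|^2$. *)

(* Defs.v *)
(* Real linear algebra over an arbitrary real closed field R
   (contains the reals as a special case). *)
From HB Require Import structures.
From mathcomp Require Import all_boot all_order all_algebra.
Set Implicit Arguments. Unset Strict Implicit. Unset Printing Implicit Defensive.
Import Order.TTheory GRing.Theory Num.Theory.
Local Open Scope ring_scope.

Definition enorm (R : rcfType) (n : nat) (v : 'cV[R]_n) : R :=
  Num.sqrt (\sum_(k < n) (v k 0) ^+ 2).

(* Main.v *)
Require Import Defs.
From HB Require Import structures.
From mathcomp Require Import all_boot all_order all_algebra.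
From mathcomp Require Import ring lra.
Import Order.TTheory GRing.Theory Num.Theory.
Local Open Scope ring_scope.

Section N.
Variable R : rcfType.
Variable n : nat.
Implicit Types u v : 'cV[R]_n.

Definition sq u := \sum_(k < n) (u k 0) ^+ 2.
Definition ip u v := \sum_(k < n) (u k 0 * v k 0).

Lemma sq_ge0 u : 0 <= sq u.
Proof. by apply: sumr_ge0 => k _; apply: sqr_ge0. Qed.

Lemma enorm_ge0 u : 0 <= enorm u.
Proof. exact: sqrtr_ge0. Qed.

Lemma enorm_sq u : enorm u ^+ 2 = sq u.
Proof. by rewrite /enorm sqr_sqrtr //; apply: sq_ge0. Qed.

Lemma lagrange u v :
  \sum_(k < n) \sum_(l < n) (u k 0 * v l 0 - u l 0 * v k 0) ^+ 2
  = 2 * (sq u * sq v - ip u v ^+ 2).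
Proof.
have -> : \sum_(k < n) \sum_(l < n) (u k 0 * v l 0 - u l 0 * v k 0) ^+ 2
  = \sum_(k < n) \sum_(l < n) ((u k 0 ^+ 2 * v l 0 ^+ 2 + v k 0 ^+ 2 * u l 0 ^+ 2)
       - 2 * ((u k 0 * v k 0) * (u l 0 * v l 0))).
  by apply: eq_bigr => k _; apply: eq_bigr => l _; ring.
have prod (f g : 'I_n -> R) : \sum_(k < n) \sum_(l < n) f k * g l
    = (\sum_(k < n) f k) * (\sum_(l < n) g l).
  by rewrite mulr_suml; apply: eq_bigr => k _; rewrite mulr_sumr.
have -> : \sum_(k < n) \sum_(l < n) ((u k 0 ^+ 2 * v l 0 ^+ 2 + v k 0 ^+ 2 * u l 0 ^+ 2)
       - 2 * ((u k 0 * v k 0) * (u l 0 * v l 0)))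
  = \sum_(k < n) \sum_(l < n) (u k 0 ^+ 2 * v l 0 ^+ 2) +
    \sum_(k < n) \sum_(l < n) (v k 0 ^+ 2 * u l 0 ^+ 2) -
    2 * \sum_(k < n) \sum_(l < n) ((u k 0 * v k 0) * (u l 0 * v l 0)).
  rewrite mulr_sumr -big_split -sumrB; apply: eq_bigr => k _.
  by rewrite mulr_sumr -big_split -sumrB; apply: eq_bigr => l _.
rewrite !prod /sq /ip; ring.
Qed.

Lemma cauchy u v : ip u v <= enorm u * enorm v.
Proof.
have h : ip u v ^+ 2 <= sq u * sq v.
  have : 0 <= \sum_(k < n) \sum_(l < n) (u k 0 * v l 0 - u l 0 * v k 0) ^+ 2.
    by apply: sumr_ge0 => k _; apply: sumr_ge0 => l _; apply: sqr_ge0.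
  rewrite lagrange => H; nra.
apply: (le_trans (ler_norm _)).
rewrite /enorm -sqrtrM ?sq_ge0 // -sqrtr_sqr ler_sqrt //.
by apply: mulr_ge0; apply: sq_ge0.
Qed.

Lemma sqD u v : sq (u + v) = sq u + 2 * ip u v + sq v.
Proof.
rewrite /sq /ip mulr_sumr -!big_split /=; apply: eq_bigr => k _.
rewrite mxE; ring.
Qed.

Lemma enormD u v : enorm (u + v) <= enorm u + enorm v.
Proof.
rewrite -(ler_pXn2r (n:=2)) // ?nnegrE ?addr_ge0 ?enorm_ge0 //.
rewrite enorm_sq sqD -!enorm_sq.
have := cauchy u v; nra.
Qed.

Lemma enormN u : enorm (- u) = enorm u.
Proof. by rewrite /enorm; congr Num.sqrt; apply: eq_bigr => k _; rewrite mxE sqrrN. Qed.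

End N.
Arguments enormD {R n}.
Arguments enormN {R n}.
Arguments enorm_ge0 {R n}.

Theorem theorem2 (R : rcfType) (E D : nat) (N_ : 'I_E -> nat)
  (X_ : forall i : 'I_E, 'M[R]_(N_ i, D))
  (y_ : forall i : 'I_E, 'cV[R]_(N_ i))
  (beta_ : 'I_E -> 'cV[R]_D)
  (r_ : forall i : 'I_E, 'cV[R]_(N_ i))
  (gamma : R) :
  (forall i, (X_ i)^T *m X_ i \in unitmx) ->
  (forall i, y_ i = X_ i *m beta_ i + r_ i) ->
  0 < gamma -> gamma <= 1 ->
  let X : 'M[R]_(\sum_i N_ i, D) := \mxcol_i X_ i in
  let y : 'cV[R]_(\sum_i N_ i) := \mxcol_i y_ i in
  let r : 'cV[R]_(\sum_i N_ i) := \mxcol_i r_ i in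
  let Z := X^T *m X in
  let Z_ i := (X_ i)^T *m X_ i in
  let wstar := invmx Z *m X^T *m y in
  let wstar_ i := invmx (Z_ i) *m (X_ i)^T *m y_ i in
  let eta := invmx Z *m X^T *m r in
  let eta_ i := invmx (Z_ i) *m (X_ i)^T *m r_ i in
  let Delta_ i j := invmx Z *m Z_ j *m (beta_ i - beta_ j) in
  let Delta i := \sum_(j | j != i) Delta_ i j in
  let maxw := \big[Num.max/0]_(i < E) (enorm (wstar_ i)) ^+ 2 in
  ((forall i, enorm (Delta i) >=
       enorm (beta_ i + eta) + (Num.sqrt gamma)^-1 * enorm (beta_ i + eta_ i)) ->
    maxw <= gamma * (enorm wstar) ^+ 2)
  /\
  ((forall i, enorm eta <= enorm (beta_ i)) ->
   (forall i, enorm (eta_ i) <= enorm (beta_ i)) ->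
   (forall i, 0 <= enorm (Delta i) - 4 / Num.sqrt gamma * enorm (beta_ i)) ->
    maxw <= gamma * (enorm wstar) ^+ 2).
Proof.
move=> Zu yE gpos gle1 X y r Z Z_ wstar wstar_ eta eta_ Delta_ Delta maxw.
set s := Num.sqrt gamma.
have spos : 0 < s by rewrite sqrtr_gt0.
have sle1 : s <= 1 by rewrite -sqrtr1 ler_sqrt.
have ss : s ^+ 2 = gamma by rewrite sqr_sqrtr // ltW.
have wiE i : wstar_ i = beta_ i + eta_ i.
  rewrite /wstar_ /eta_ yE mulmxDr; congr (_ + _).
  rewrite mulmxA -(mulmxA (invmx _)) mulVmx ?mul_scalar_mx ?scale1r //; exact: Zu.
have ZE : Z = \sum_j Z_ j by rewrite /Z /X tr_mxcol mul_mxrow_mxcol.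
have XtyE : X^T *m y = \sum_j (Z_ j *m beta_ j) + X^T *m r.
  rewrite /X /y /r tr_mxcol !mul_mxrow_mxcol -big_split; apply: eq_bigr => j _.
  by rewrite yE mulmxDr mulmxA.
have ZU : (exists i : 'I_E, True) -> Z \in unitmx.
  case=> i0 _; rewrite unitmxE unitfE; apply/det0P => -[v nz vZ].
  have w0 : forall j, v *m (X_ j)^T = 0.
    have h : \sum_j \sum_(k < N_ j) ((v *m (X_ j)^T) 0 k) ^+ 2 = 0.
      have : (v *m Z *m v^T) 0 0 = 0 by rewrite vZ mul0mx mxE.
      rewrite ZE mulmx_sumr mulmx_suml summxE => e; apply: (etrans _ e).
      apply: eq_bigr => j _.
      have -> : v *m Z_ j *m v^T = (v *m (X_ j)^T) *m (v *m (X_ j)^T)^T by rewrite trmx_mul trmxK !mulmxA.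
      rewrite mxE; apply: eq_bigr => k _; rewrite !mxE expr2.
      congr (_ * _); rewrite !mxE; apply: eq_bigr => l _; rewrite !mxE mulrC.
    move=> j; apply/matrixP => a k; rewrite [a]ord1 [RHS]mxE.
    have hj : \sum_(k < N_ j) ((v *m (X_ j)^T) 0 k) ^+ 2 = 0.
      move: h; move/psumr_eq0P; apply => // j' _.
      by apply: sumr_ge0 => k' _; apply: sqr_ge0.
 apply/eqP; rewrite -sqrf_eq0; apply/eqP.
    by move: hj; move/psumr_eq0P; apply => // k' _; apply: sqr_ge0.
  move/negP: nz; apply; apply/eqP.
  have : v *m Z_ i0 = 0 by rewrite /Z_ mulmxA w0 mul0mx.
  move/(congr1 (mulmx^~ (invmx (Z_ i0)))).
  by rewrite -mulmxA mulmxV ?mul_mx_scalar ?scale1r ?mul0mx //; exact: Zu.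
have core i : enorm (Delta i) >=
       enorm (beta_ i + eta) + s^-1 * enorm (beta_ i + eta_ i) ->
    enorm (wstar_ i) ^+ 2 <= gamma * enorm wstar ^+ 2.
  move=> H.
  have Zu' := ZU (ex_intro _ i I).
  have DE : Delta i = (beta_ i + eta) + - wstar.
    have -> : Delta i = \sum_j Delta_ i j.
      rewrite [RHS](bigD1 i) //= /Delta_ subrr mulmx0 add0r //.
    set S := \sum_j (Z_ j *m beta_ j).
    have wE : wstar = invmx Z *m S + eta.
      by rewrite /wstar -mulmxA XtyE mulmxDr mulmxA.
    have -> : \sum_j Delta_ i j = \sum_j (invmx Z *m Z_ j *m beta_ i - invmx Z *m (Z_ j *m beta_ j)).
      by apply: eq_bigr => j _; rewrite /Delta_ mulmxBr -[invmx Z *m Z_ j *m beta_ j]mulmxA.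
    rewrite sumrB -mulmx_suml -mulmx_sumr -mulmx_sumr -/S -ZE mulVmx ?mul_scalar_mx ?scale1r //.
    by rewrite wE opprD addrACA subrr addr0.
  have tri := enormD (beta_ i + eta) (- wstar).
  rewrite enormN -DE in tri.
  rewrite wiE.
  set a := enorm (beta_ i + eta_ i) in H *.
  set b := enorm (beta_ i + eta) in H tri *.
  set c := enorm wstar in tri *.
  set d := enorm (Delta i) in H tri *.
  have a0 : 0 <= a by apply: enorm_ge0.
  have c0 : 0 <= c by apply: enorm_ge0.
  have h1 : s^-1 * a <= c by lra.
  have h2 : a <= s * c.
    have -> : a = s * (s^-1 * a) by rewrite mulrA mulfV ?mul1r // gt_eqF.
    by rewrite ler_pM2l.
  rewrite -ss; nra.
split.
  move=> H; rewrite /maxw; apply: (big_ind (fun x => x <= gamma * enorm wstar ^+ 2)).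
  - by apply: mulr_ge0; [exact: ltW | exact: sqr_ge0].
  - by move=> x1 x2 h1 h2; rewrite ge_max h1 h2.
  - by move=> i _; apply: core.
move=> He Hei HD.
rewrite /maxw; apply: (big_ind (fun x => x <= gamma * enorm wstar ^+ 2)).
- by apply: mulr_ge0; [exact: ltW | exact: sqr_ge0].
- by move=> x1 x2 h1 h2; rewrite ge_max h1 h2.
move=> i _; apply: core.
have t1 := enormD (beta_ i) eta.
have t2 := enormD (beta_ i) (eta_ i).
have := He i; have := Hei i; have := HD i.
have b0 := enorm_ge0 (beta_ i).
have := enorm_ge0 (beta_ i + eta_ i).
set b := enorm (beta_ i) in t1 t2 b0 *.
set p := enorm (beta_ i + eta) in t1 *.
set q := enorm (beta_ i + eta_ i) in t2 *.
set t := s^-1.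
have ts : t * s = 1 by rewrite mulVf // gt_eqF.
have t1' : 1 <= t by rewrite invf_ge1.
move=> q0 hD h2 h1.
have e1 : t * q <= t * (2 * b) by apply: ler_wpM2l; lra.
have e2 : 2 * b <= 2 * (t * b) by nra.
have e3 : 4 / s * b = 4 * (t * b) by rewrite /t mulrA.
lra.
Qed.
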